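(* Let $n,m\in\mathbb{N}$, $f\in C[0,1]$, and let $\overline{B}_{n,m}$ be the composite Bernstein operator defined in the context. Then for every $k\in\{1,\dots,m\}$ and every $x\in\left[\frac{k-1}{m},\frac{k}{m}\right]$, $$ |\overline{B}_{n,m}(f;x)-f(x)|\le \frac32\,\omega_2\left(f;\sqrt{\frac{\left(x-\frac{k-1}{m}\right)\left(\frac{k}{m}-x\right)}{n}}\right). $$
   Context: For $a<b$, $f:[a,b]\to\mathbb{R}$ and $n\in\mathbb{N}$, the Bernstein polynomial on $[a,b]$ is $B_n^{[a,b]}(f;x)=\frac{1}{(b-a)^n}\sum_{i=0}^n\binom{n}{i}(x-a)^i(b-x)^{n-i}f\left(a+i\frac{b-a}{n}\right)$. For $m\in\mathbb{N}$ and $1\le k\le m$ put $B_{n,k}(f;x):=B_n^{[\frac{k-1}{m},\frac{k}{m}]}(f;x)$, and define $\overline{B}_{n,m}(f;x):=B_{n,k}(f;x)$ if $x\in\left[\frac{k-1}{m},\frac{k}{m}\right]$ (well defined at the break points, where both pieces equal $f(k/m)$). The second-order modulus of continuity on $[0,1]$ is $\omega_2(f,\delta)=\sup\{|f(x-h)-2f(x)+f(x+h)|: x\pm h\in[0,1],\ |h|\le\delta\}$ for $\delta\ge0$. *)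

(* Defs.v *)
From Stdlib Require Import Reals Lra Lia ZArith.
From Coquelicot Require Import Coquelicot.
Open Scope R_scope.

Definition bernstein_ab (a b : R) (n : nat) (f : R -> R) (x : R) : R :=
  / (b - a) ^ n *
  sum_f_R0 (fun i => Binomial.C n i * (x - a) ^ i * (b - x) ^ (n - i)
                     * f (a + INR i * ((b - a) / INR n))) n.

Definition B_nk (n m k : nat) (f : R -> R) (x : R) : R :=
  bernstein_ab ((INR k - 1) / INR m) (INR k / INR m) n f x.

(* Index of the piece containing x: for x in [0,1), k = floor(m x) + 1;
   for x = 1, k = m.  (At break points both pieces agree, as noted in the paper.) *)
Definition piece_index (m : nat) (x : R) : nat :=
  Nat.min m (Z.to_nat (up (INR m * x))).

Definition Bbar (n m : nat) (f : R -> R) (x : R) : R :=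
  B_nk n m (piece_index m x) f x.

Definition omega2_set (f : R -> R) (delta : R) (r : R) : Prop :=
  exists x h : R, 0 <= x - h /\ x - h <= 1 /\ 0 <= x + h /\ x + h <= 1 /\
    Rabs h <= delta /\ r = Rabs (f (x - h) - 2 * f x + f (x + h)).

Definition omega2 (f : R -> R) (delta : R) : R :=
  real (Lub_Rbar (omega2_set f delta)).

Definition continuous_on_01 (f : R -> R) : Prop :=
  forall x, 0 <= x <= 1 -> forall eps, 0 < eps -> exists delta, 0 < delta /\
    forall y, 0 <= y <= 1 -> Rabs (y - x) < delta -> Rabs (f y - f x) < eps.

(* Main.v *)
Require Import Defs.
From Stdlib Require Import Reals Lra Lia ZArith.
From Coquelicot Require Import Coquelicot.
Open Scope R_scope.


Lemma sum_lin3 (A B D : nat -> R) (p q r : R) (N : nat) :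
  sum_f_R0 (fun i => p * A i + q * B i + r * D i) N =
  p * sum_f_R0 A N + q * sum_f_R0 B N + r * sum_f_R0 D N.
Proof. induction N; simpl; [ring| rewrite IHN; ring]. Qed.

Lemma sum_scal (A : nat -> R) (p : R) (N : nat) :
  sum_f_R0 (fun i => p * A i) N = p * sum_f_R0 A N.
Proof. induction N; simpl; [ring| rewrite IHN; ring]. Qed.

Lemma sum_plus2 (A B : nat -> R) (N : nat) :
  sum_f_R0 (fun i => A i + B i) N = sum_f_R0 A N + sum_f_R0 B N.
Proof. induction N; simpl; [ring| rewrite IHN; ring]. Qed.

Lemma Cid (n j : nat) : (j <= n)%nat ->
  Binomial.C (S n) (S j) * INR (S j) = INR (S n) * Binomial.C n j.
Proof.
  intros Hj. unfold Binomial.C.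
  replace (S n - S j)%nat with (n - j)%nat by lia.
  rewrite !fact_simpl, !mult_INR.
  assert (H1 := INR_fact_neq_0 n). assert (H2 := INR_fact_neq_0 j).
  assert (H3 := INR_fact_neq_0 (n - j)).
  assert (H4 : INR (S j) <> 0) by (apply not_0_INR; lia).
  field. repeat split; auto.
Qed.

Lemma C_nonneg (n i : nat) : 0 <= Binomial.C n i.
Proof.
  unfold Binomial.C. apply Rlt_le. apply Rdiv_lt_0_compat.
  apply lt_0_INR, lt_O_fact.
  apply Rmult_lt_0_compat; apply lt_0_INR, lt_O_fact.
Qed.

Lemma mom1 (u v : R) (n : nat) :
  sum_f_R0 (fun i => Binomial.C n i * u ^ i * v ^ (n - i) * INR i) n
  = INR n * u * (u + v) ^ (pred n).
Proof.
  destruct n as [|n].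
  - simpl. ring.
  - rewrite decomp_sum by lia. simpl pred.
    rewrite binomial, <- sum_scal.
    rewrite Rmult_0_r, Rplus_0_l.
    apply sum_eq. intros j Hj.
    replace (S n - S j)%nat with (n - j)%nat by lia.
    replace (Binomial.C (S n) (S j) * u ^ S j * v ^ (n - j) * INR (S j))
      with ((Binomial.C (S n) (S j) * INR (S j)) * u ^ S j * v ^ (n - j)) by ring.
    rewrite Cid by exact Hj. simpl pow. ring.
Qed.

Lemma mom2 (u v : R) (n : nat) :
  sum_f_R0 (fun i => Binomial.C (S n) i * u ^ i * v ^ (S n - i) * INR i * INR i) (S n)
  = INR (S n) * u * (INR n * u * (u + v) ^ (pred n) + (u + v) ^ n).
Proof.
  rewrite decomp_sum by lia. simpl pred.
  rewrite <- mom1, binomial, <- sum_plus2, <- sum_scal.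
  rewrite !Rmult_0_r, Rplus_0_l.
  apply sum_eq. intros j Hj.
  replace (S n - S j)%nat with (n - j)%nat by lia.
  replace (Binomial.C (S n) (S j) * u ^ S j * v ^ (n - j) * INR (S j) * INR (S j))
    with ((Binomial.C (S n) (S j) * INR (S j)) * u ^ S j * v ^ (n - j) * INR (S j)) by ring.
  rewrite Cid by exact Hj. rewrite S_INR. simpl pow. rewrite S_INR. ring.
Qed.


Lemma maxp (G : R -> R) (s t x h w : R) : s < t -> s <= x <= t -> 0 < h ->
  (forall y, continuity_pt G y) ->
  (forall y u, 0 <= u <= h -> s <= y - u -> y + u <= t ->
     - w <= G (y - u) - 2 * G y + G (y + u)) ->
  (t - s) * G x - (t - x) * G s - (x - s) * G t
    <= (t - s) * w * (1 + (x - s) * (t - x) / (2 * h ^ 2)).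
Proof.
  intros Hst Hx Hh Hc HW.
  assert (Hw : 0 <= w).
  { assert (K := HW s 0 ltac:(lra) ltac:(lra) ltac:(lra)).
    replace (s - 0) with s in K by ring. replace (s + 0) with s in K by ring. lra. }
  set (P := fun y => G s + (G t - G s) * (y - s) / (t - s) + w * (y - s) * (t - y) / (2 * h ^ 2)).
  set (H := fun y => G y - P y).
  assert (HcH : forall y, continuity_pt H y).
  { intro y. unfold H. apply (continuity_pt_minus G P). apply Hc.
    unfold P. reg. }
  assert (HD : forall z u, H (z - u) - 2 * H z + H (z + u)
      = (G (z - u) - 2 * G z + G (z + u)) + w * u ^ 2 / h ^ 2).
  { intros z u. unfold H, P. field. split; lra. }
  assert (Hs0 : H s = 0). { unfold H, P. field. split; lra. }
  assert (Ht0 : H t = 0). { unfold H, P. field. split; lra. }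
  destruct (continuity_ab_maj H s t ltac:(lra) (fun c _ => HcH c)) as [x0 [Hmax Hx0]].
  assert (Hdir : forall z, s <= z <= t -> H z = H x0 -> (z - s < h \/ t - z < h) -> H x0 <= w).
  { intros z Hz Hzz Hor.
    set (u := Rmin (z - s) (t - z)).
    assert (Hu1 : u <= z - s) by apply Rmin_l.
    assert (Hu2 : u <= t - z) by apply Rmin_r.
    assert (Hu0 : 0 <= u) by (apply Rmin_glb; lra).
    assert (Huh : u <= h) by (destruct Hor; lra).
    assert (K := HW z u ltac:(lra) ltac:(lra) ltac:(lra)).
    assert (K2 := HD z u).
    assert (Hq : 0 <= w * u ^ 2 / h ^ 2).
    { apply Rmult_le_pos. apply Rmult_le_pos; [lra| apply pow2_ge_0].
      apply Rlt_le, Rinv_0_lt_compat, pow_lt; lra. }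
    assert (Hm1 := Hmax (z - u) ltac:(lra)).
    assert (Hm2 := Hmax (z + u) ltac:(lra)).
    destruct (Rle_lt_dec (z - s) (t - z)) as [E|E].
    - assert (Eu : u = z - s) by (unfold u, Rmin; destruct Rle_dec; lra).
      rewrite Eu in *. replace (z - (z - s)) with s in * by ring. lra.
    - assert (Eu : u = t - z) by (unfold u, Rmin; destruct Rle_dec; lra).
      rewrite Eu in *. replace (z + (t - z)) with t in * by ring. lra. }
  assert (Hind : forall N z, s <= z <= t -> H z = H x0 -> z - s <= INR N * h -> H x0 <= w).
  { induction N as [|N IH]; intros z Hz Hzz HN.
    - apply (Hdir z); auto. simpl in HN. lra.
    - destruct (Rlt_or_le (z - s) h) as [L|L]; [apply (Hdir z); auto|].
      destruct (Rlt_or_le (t - z) h) as [L2|L2]; [apply (Hdir z); auto|].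
      assert (K := HW z h ltac:(lra) ltac:(lra) ltac:(lra)).
      assert (K2 := HD z h).
      assert (Hq : w * h ^ 2 / h ^ 2 = w) by (field; lra).
      assert (Hm1 := Hmax (z - h) ltac:(lra)).
      assert (Hm2 := Hmax (z + h) ltac:(lra)).
      apply (IH (z - h)); [lra| lra|]. rewrite S_INR in HN. lra. }
  destruct (archimed ((t - s) / h)) as [A1 _].
  assert (Hpos : 0 < (t - s) / h) by (apply Rdiv_lt_0_compat; lra).
  assert (HZ : (0 <= up ((t - s) / h))%Z).
  { apply le_IZR. lra. }
  assert (HN : x0 - s <= INR (Z.to_nat (up ((t - s) / h))) * h).
  { rewrite INR_IZR_INZ, Z2Nat.id by exact HZ.
    assert ((t - s) / h * h = t - s) by (field; lra).
    assert (IZR (up ((t - s) / h)) * h >= (t-s)/h * h).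
    { apply Rle_ge, Rmult_le_compat_r; lra. }
    lra. }
  assert (HM := Hind _ x0 Hx0 eq_refl HN).
  assert (Hhx := Hmax x Hx).
  assert (Hxw : H x <= w) by lra.
  unfold H, P in Hxw.
  assert (E : (t - s) * (G x - (G s + (G t - G s) * (x - s) / (t - s) + w * (x - s) * (t - x) / (2 * h ^ 2)))
      = (t - s) * G x - (t - x) * G s - (x - s) * G t - (t - s) * w * ((x - s) * (t - x) / (2 * h ^ 2)))
    by (field; split; lra).
  assert (K := Rmult_le_compat_l (t - s) _ _ ltac:(lra) Hxw).
  rewrite E in K. lra.
Qed.


Lemma sum_lin4 (A B D E : nat -> R) (p q r : R) (N : nat) :
  sum_f_R0 (fun i => A i + p * B i + q * D i + r * E i) N =
  sum_f_R0 A N + p * sum_f_R0 B N + q * sum_f_R0 D N + r * sum_f_R0 E N.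
Proof. induction N; simpl; [ring| rewrite IHN; ring]. Qed.

Lemma decomp (F : R -> R) (a b x : R) (n : nat) : a < b ->
  bernstein_ab a b n F x - F x =
  / (b - a) ^ n * sum_f_R0 (fun i => Binomial.C n i * (x - a) ^ i * (b - x) ^ (n - i)
       * (F (a + INR i * ((b - a) / INR n)) - F x)) n.
Proof.
  intros Hab. unfold bernstein_ab.
  assert (HT : (b - a) ^ n <> 0) by (apply pow_nonzero; lra).
  assert (E0 : sum_f_R0 (fun i => Binomial.C n i * (x - a) ^ i * (b - x) ^ (n - i)) n = (b - a) ^ n).
  { rewrite <- binomial. f_equal. ring. }
  transitivity (/ (b - a) ^ n * (sum_f_R0 (fun i => Binomial.C n i * (x - a) ^ i * (b - x) ^ (n - i)
                     * F (a + INR i * ((b - a) / INR n))) n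
       + (- F x) * sum_f_R0 (fun i => Binomial.C n i * (x - a) ^ i * (b - x) ^ (n - i)) n)).
  - rewrite E0. field. exact HT.
  - f_equal. rewrite <- sum_scal, <- sum_plus2. apply sum_eq. intros; ring.
Qed.

Lemma sum_zero (A : nat -> R) (N : nat) : (forall i, (i <= N)%nat -> A i = 0) -> sum_f_R0 A N = 0.
Proof.
  intros H. transitivity (sum_f_R0 (fun i => 0 * 1) N).
  - apply sum_eq. intros i Hi. rewrite H by exact Hi. ring.
  - rewrite sum_scal. ring.
Qed.

Lemma bern_left (F : R -> R) (a b : R) (n : nat) : a < b -> bernstein_ab a b n F a - F a = 0.
Proof.
  intros Hab. rewrite decomp by exact Hab. rewrite sum_zero; [ring|].
  intros i Hi. destruct i as [|i].
  - simpl. replace (a + 0 * ((b - a) / INR n)) with a by ring. ring.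
  - replace (a - a) with 0 by ring. rewrite pow_i by lia. ring.
Qed.

Lemma bern_right (F : R -> R) (a b : R) (n : nat) : (1 <= n)%nat -> a < b -> bernstein_ab a b n F b - F b = 0.
Proof.
  intros Hn Hab. rewrite decomp by exact Hab. rewrite sum_zero; [ring|].
  intros i Hi. destruct (Nat.eq_dec i n) as [->|Hne].
  - replace (a + INR n * ((b - a) / INR n)) with b. ring.
    field. apply not_0_INR. lia.
  - replace (b - b) with 0 by ring. rewrite (pow_i (n - i)) by lia. ring.
Qed.

Lemma helper1 (p q A B : R) : 0 < p -> 0 < q -> p * A + q * B <= 0 -> A / q <= - B / p.
Proof.
  intros Hp Hq H.
  assert (E : - B / p - A / q = - (p * A + q * B) * (/ p * / q)) by (field; lra).
  assert (0 <= - (p * A + q * B) * (/ p * / q)).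
  { apply Rmult_le_pos; [lra|]. apply Rmult_le_pos; apply Rlt_le, Rinv_0_lt_compat; lra. }
  lra.
Qed.

Lemma helper2 (q A c : R) : 0 < q -> A / q <= c -> A <= c * q.
Proof.
  intros Hq H. assert (E : A = A / q * q) by (field; lra).
  rewrite E. apply Rmult_le_compat_r; lra.
Qed.

Lemma core_upper (F : R -> R) (a b x w : R) (n : nat) :
  (1 <= n)%nat -> a < b -> a <= x <= b -> (forall y, continuity_pt F y) ->
  (forall y u, 0 <= u <= sqrt ((x - a) * (b - x) / INR n) -> a <= y - u -> y + u <= b ->
     Rabs (F (y - u) - 2 * F y + F (y + u)) <= w) ->
  bernstein_ab a b n F x - F x <= 3 / 2 * w.
Proof.
  intros Hn Hab Hx Hc HW.
  assert (Hw : 0 <= w).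
  { assert (K := HW a 0 ltac:(split; [lra| apply sqrt_pos]) ltac:(lra) ltac:(lra)).
    replace (F (a - 0) - 2 * F a + F (a + 0)) with 0 in K by (rewrite Rminus_0_r, Rplus_0_r; ring).
    rewrite Rabs_R0 in K. exact K. }
  destruct (Req_dec x a) as [->|Hxa]; [rewrite bern_left by lra; lra|].
  destruct (Req_dec x b) as [->|Hxb]; [rewrite bern_right by first [lia|lra]; lra|].
  assert (Hax : a < x) by (destruct Hx as [H1 _]; destruct H1; [auto| subst; congruence]).
  assert (Hxb' : x < b) by (destruct Hx as [_ H1]; destruct H1; [auto| subst; congruence]).
  assert (Hn0 : 0 < INR n) by (apply lt_0_INR; lia).
  set (h := sqrt ((x - a) * (b - x) / INR n)) in *.
  assert (Hq : 0 < (x - a) * (b - x) / INR n).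
  { apply Rdiv_lt_0_compat; [apply Rmult_lt_0_compat; lra| exact Hn0]. }
  assert (Hh : 0 < h) by (apply sqrt_lt_R0; exact Hq).
  assert (Hh2 : h ^ 2 = (x - a) * (b - x) / INR n).
  { unfold h. simpl. rewrite Rmult_1_r. apply sqrt_sqrt. lra. }
  set (g := fun y => F y - F x - w - w * (y - x) ^ 2 / (2 * h ^ 2)).
  assert (two : forall s t, a <= s < x -> x < t <= b -> (x - s) * g t + (t - x) * g s <= 0).
  { intros s t Hs Ht.
    assert (K := maxp (fun y => - F y) s t x h w ltac:(lra) ltac:(lra) Hh
       (fun y => continuity_pt_opp F y (Hc y))).
    assert (K' : (t - s) * - F x - (t - x) * - F s - (x - s) * - F t
      <= (t - s) * w * (1 + (x - s) * (t - x) / (2 * h ^ 2))).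
    { apply K. intros y u Hu H1 H2.
      assert (L := HW y u Hu ltac:(lra) ltac:(lra)).
      assert (L2 := Rle_abs (F (y - u) - 2 * F y + F (y + u))).
      cbv beta. lra. }
    assert (E : (x - s) * g t + (t - x) * g s =
      ((t - s) * - F x - (t - x) * - F s - (x - s) * - F t)
      - (t - s) * w * (1 + (x - s) * (t - x) / (2 * h ^ 2))).
    { unfold g. field. lra. }
    rewrite E. lra. }
  set (Es := fun r => exists t, x < t <= b /\ r = g t / (t - x)).
  assert (Hub : forall s, a <= s < x -> is_upper_bound Es (- g s / (x - s))).
  { intros s Hs r [t [Ht ->]]. apply helper1; try lra.
    apply two; lra. }
  assert (Hne : exists r, Es r) by (exists (g b / (b - x)); exists b; split; [lra| reflexivity]).
  assert (Hbd : bound Es) by (exists (- g a / (x - a)); apply Hub; lra).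
  destruct (completeness Es Hbd Hne) as [c [Hc1 Hc2]].
  assert (lin : forall y, a <= y <= b -> g y <= c * (y - x)).
  { intros y Hy. destruct (Rtotal_order y x) as [L|[L|L]].
    - assert (K := Hc2 _ (Hub y ltac:(lra))).
      assert (K2 : c * (x - y) <= - g y / (x - y) * (x - y)) by (apply Rmult_le_compat_r; lra).
      replace (- g y / (x - y) * (x - y)) with (- g y) in K2 by (field; lra). lra.
    - subst y. unfold g. replace (x - x) with 0 by ring.
      replace (w * 0 ^ 2 / (2 * h ^ 2)) with 0 by (field; lra). lra.
    - apply helper2; [lra|]. apply Hc1. exists y. split; [lra|reflexivity]. }
  set (W := fun i => Binomial.C n i * (x - a) ^ i * (b - x) ^ (n - i)).
  assert (HWp : forall i, 0 <= W i).
  { intro i. unfold W. apply Rmult_le_pos; [apply Rmult_le_pos|];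
      [apply C_nonneg| apply pow_le; lra| apply pow_le; lra]. }
  assert (Hnode : forall i, (i <= n)%nat -> a <= a + INR i * ((b - a) / INR n) <= b).
  { intros i Hi. assert (Hi' := le_INR _ _ Hi). assert (0 <= INR i) by apply pos_INR.
    split.
    - assert (0 <= INR i * ((b - a) / INR n)); [|lra].
      apply Rmult_le_pos; [lra| apply Rlt_le, Rdiv_lt_0_compat; lra].
    - assert (INR i * ((b - a) / INR n) <= INR n * ((b - a) / INR n)).
      { apply Rmult_le_compat_r; [apply Rlt_le, Rdiv_lt_0_compat; lra| lra]. }
      replace (INR n * ((b - a) / INR n)) with (b - a) in H0 by (field; lra). lra. }
  set (D := sum_f_R0 (fun i => W i * (F (a + INR i * ((b - a) / INR n)) - F x)) n).
  set (S0 := sum_f_R0 W n).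
  set (S1 := sum_f_R0 (fun i => W i * INR i) n).
  set (S2 := sum_f_R0 (fun i => W i * INR i * INR i) n).
  assert (Hle : sum_f_R0 (fun i => W i * g (a + INR i * ((b - a) / INR n))) n
      <= sum_f_R0 (fun i => W i * (c * (a + INR i * ((b - a) / INR n) - x))) n).
  { apply sum_Rle. intros i Hi. apply Rmult_le_compat_l; [apply HWp| apply lin, Hnode, Hi]. }
  set (T := b - a).
  assert (E1 : sum_f_R0 (fun i => W i * (c * (a + INR i * ((b - a) / INR n) - x))) n
     = sum_f_R0 (fun _ => 0) n + (- c * (x - a)) * S0 + (c * (T / INR n)) * S1 + 0 * S2).
  { unfold S0, S1, S2. rewrite <- sum_lin4. apply sum_eq. intros i _. unfold T. ring. }
  assert (E2 : sum_f_R0 (fun i => W i * g (a + INR i * ((b - a) / INR n))) n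
     = D + (- w - w * (x - a) ^ 2 / (2 * h ^ 2)) * S0
         + (w * 2 * (x - a) * (T / INR n) / (2 * h ^ 2)) * S1
         + (- w * (T / INR n) ^ 2 / (2 * h ^ 2)) * S2).
  { unfold D, S0, S1, S2. rewrite <- sum_lin4. apply sum_eq. intros i _. unfold g, T.
    field. lra. }
  assert (HS0 : S0 = T ^ n).
  { unfold S0, W, T. rewrite <- binomial. f_equal. ring. }
  assert (HS1 : S1 = INR n * (x - a) * T ^ (pred n)).
  { unfold S1, W, T. rewrite mom1. f_equal. f_equal. ring. }
  rewrite decomp by lra. fold W. fold D.
  assert (HT : 0 < T ^ n) by (apply pow_lt; unfold T; lra).
  destruct n as [|n']; [lia|].
  assert (HS2 : S2 = INR (S n') * (x - a) * (INR n' * (x - a) * T ^ (pred n') + T ^ n')).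
  { unfold S2, W, T. rewrite mom2. replace (x - a + (b - x)) with (b - a) by ring. reflexivity. }
  rewrite (sum_zero (fun _ => 0)) in E1 by reflexivity.
  assert (Hfin : D <= 3 / 2 * w * T ^ S n').
  { assert (K : D + (- w - w * (x - a) ^ 2 / (2 * h ^ 2)) * S0
         + (w * 2 * (x - a) * (T / INR (S n')) / (2 * h ^ 2)) * S1
         + (- w * (T / INR (S n')) ^ 2 / (2 * h ^ 2)) * S2 <= 0).
    { rewrite <- E2. eapply Rle_trans; [exact Hle|]. rewrite E1, HS0, HS1. simpl pred.
      replace (T ^ S n') with (T * T ^ n') by reflexivity.
      right. field. lra. }
    assert (E3 : (- w - w * (x - a) ^ 2 / (2 * h ^ 2)) * S0
         + (w * 2 * (x - a) * (T / INR (S n')) / (2 * h ^ 2)) * S1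
         + (- w * (T / INR (S n')) ^ 2 / (2 * h ^ 2)) * S2 = - (3 / 2) * w * T ^ S n').
    { rewrite HS0, HS1, HS2, Hh2. simpl pred. unfold T.
      destruct n' as [|n''].
      - simpl. field. repeat split; lra.
      - replace ((b - a) ^ S (S n'')) with ((b - a) * (b - a) * (b - a) ^ n'') by (simpl; ring).
        replace ((b - a) ^ S n'') with ((b - a) * (b - a) ^ n'') by (simpl; ring).
        simpl pred. rewrite !S_INR. assert (0 <= INR n'') by apply pos_INR. field.
        repeat split; lra. }
    lra. }
  assert (Hinv : 0 < / T ^ S n') by (apply Rinv_0_lt_compat; exact HT).
  assert (HT' : T ^ S n' <> 0) by lra.
  assert (Ex : / T ^ S n' * (3 / 2 * w * T ^ S n') = 3 / 2 * w) by (field; exact HT').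
  rewrite <- Ex. fold T. apply Rmult_le_compat_l; [lra| exact Hfin].
Qed.


Lemma bern_opp (F : R -> R) a b n x :
  bernstein_ab a b n (fun y => - F y) x = - bernstein_ab a b n F x.
Proof.
  unfold bernstein_ab.
  replace (- (/ (b - a) ^ n * sum_f_R0 (fun i => Binomial.C n i * (x - a) ^ i * (b - x) ^ (n - i)
     * F (a + INR i * ((b - a) / INR n))) n))
   with (/ (b - a) ^ n * ((-1) * sum_f_R0 (fun i => Binomial.C n i * (x - a) ^ i * (b - x) ^ (n - i)
     * F (a + INR i * ((b - a) / INR n))) n)) by ring.
  f_equal. rewrite <- sum_scal. apply sum_eq. intros; ring.
Qed.

Lemma node_in a b n i : (1 <= n)%nat -> a < b -> (i <= n)%nat ->
  a <= a + INR i * ((b - a) / INR n) <= b.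
Proof.
  intros Hn Hab Hi. assert (Hn0 : 0 < INR n) by (apply lt_0_INR; lia).
  assert (Hi' := le_INR _ _ Hi). assert (0 <= INR i) by apply pos_INR.
  split.
  - assert (0 <= INR i * ((b - a) / INR n)); [|lra].
    apply Rmult_le_pos; [lra| apply Rlt_le, Rdiv_lt_0_compat; lra].
  - assert (INR i * ((b - a) / INR n) <= INR n * ((b - a) / INR n)).
    { apply Rmult_le_compat_r; [apply Rlt_le, Rdiv_lt_0_compat; lra| lra]. }
    replace (INR n * ((b - a) / INR n)) with (b - a) in H0 by (field; lra). lra.
Qed.

Lemma bern_ext (F G : R -> R) a b n x : (1 <= n)%nat -> a < b ->
  (forall y, a <= y <= b -> F y = G y) ->
  bernstein_ab a b n F x = bernstein_ab a b n G x.
Proof.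
  intros Hn Hab HFG. unfold bernstein_ab. f_equal. apply sum_eq. intros i Hi.
  rewrite HFG; [reflexivity| apply node_in; auto].
Qed.

Lemma core (F : R -> R) (a b x w : R) (n : nat) :
  (1 <= n)%nat -> a < b -> a <= x <= b -> (forall y, continuity_pt F y) ->
  (forall y u, 0 <= u <= sqrt ((x - a) * (b - x) / INR n) -> a <= y - u -> y + u <= b ->
     Rabs (F (y - u) - 2 * F y + F (y + u)) <= w) ->
  Rabs (bernstein_ab a b n F x - F x) <= 3 / 2 * w.
Proof.
  intros Hn Hab Hx Hc HW.
  assert (U := core_upper F a b x w n Hn Hab Hx Hc HW).
  assert (L := core_upper (fun y => - F y) a b x w n Hn Hab Hx
     (fun y => continuity_pt_opp F y (Hc y))).
  rewrite bern_opp in L.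
  assert (L' : - bernstein_ab a b n F x - - F x <= 3 / 2 * w).
  { apply L. intros y u Hu H1 H2.
    replace (- F (y - u) - 2 * - F y + - F (y + u)) with (- (F (y - u) - 2 * F y + F (y + u))) by ring.
    rewrite Rabs_Ropp. apply HW; auto. }
  apply Rabs_le. lra.
Qed.

Definition clamp (y : R) := Rmax 0 (Rmin 1 y).

Lemma clamp_in y : 0 <= clamp y <= 1.
Proof. unfold clamp, Rmax, Rmin. repeat destruct Rle_dec; lra. Qed.

Lemma clamp_id y : 0 <= y <= 1 -> clamp y = y.
Proof. intros H. unfold clamp, Rmax, Rmin. repeat destruct Rle_dec; lra. Qed.

Lemma clamp_lip y z : Rabs (clamp y - clamp z) <= Rabs (y - z).
Proof.
  unfold clamp, Rmax, Rmin. repeat destruct Rle_dec;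
  unfold Rabs; repeat destruct Rcase_abs; lra.
Qed.

Lemma fc_cont (f : R -> R) : continuous_on_01 f -> forall y, continuity_pt (fun z => f (clamp z)) y.
Proof.
  intros Hf y. unfold continuity_pt, continue_in, limit1_in, limit_in. simpl. unfold R_dist.
  intros eps Heps.
  destruct (Hf (clamp y) (clamp_in y) eps Heps) as [d [Hd Hd2]].
  exists d. split; [exact Hd|]. intros z [_ Hz].
  apply Hd2; [apply clamp_in|]. eapply Rle_lt_trans; [apply clamp_lip| exact Hz].
Qed.


Lemma omega2_spec (f : R -> R) (d : R) : continuous_on_01 f -> 0 <= d ->
  (forall r, omega2_set f d r -> r <= omega2 f d) /\ 0 <= omega2 f d.
Proof.
  intros Hf Hd.
  destruct (continuity_ab_maj (fun z => f (clamp z)) 0 1 ltac:(lra) (fun c _ => fc_cont f Hf c)) as [Mx [HM _]].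
  destruct (continuity_ab_min (fun z => f (clamp z)) 0 1 ltac:(lra) (fun c _ => fc_cont f Hf c)) as [mx [Hmn _]].
  assert (Hb : forall p, 0 <= p <= 1 -> f (clamp mx) <= f p <= f (clamp Mx)).
  { intros p Hp. rewrite <- (clamp_id p Hp). split; [apply Hmn| apply HM]; auto. }
  set (K := 2 * (f (clamp Mx) - f (clamp mx))).
  assert (Hub : forall r, omega2_set f d r -> r <= K).
  { intros r [y [u [H1 [H2 [H3 [H4 [H5 ->]]]]]]].
    assert (A1 := Hb (y - u) ltac:(lra)). assert (A2 := Hb y ltac:(lra)).
    assert (A3 := Hb (y + u) ltac:(lra)). apply Rabs_le. unfold K. lra. }
  assert (H0 : omega2_set f d 0).
  { exists 0, 0. rewrite Rminus_0_r, Rplus_0_r, Rabs_R0.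
    repeat split; try lra. replace (f 0 - 2 * f 0 + f 0) with 0 by ring. rewrite Rabs_R0. reflexivity. }
  pose proof (Lub_Rbar_correct (omega2_set f d)) as [Hu Hl].
  unfold omega2. remember (Lub_Rbar (omega2_set f d)) as L.
  assert (Z1 := Hu 0 H0).
  assert (Z2 := Hl (Finite K) (fun r Hr => Hub r Hr)).
  destruct L as [l| |]; simpl in *; try contradiction.
  split; [|exact Z1]. intros r Hr. exact (Hu r Hr).
Qed.

Lemma piece_cases (m k : nat) (x : R) : (1 <= k <= m)%nat ->
  (INR k - 1) / INR m <= x <= INR k / INR m ->
  piece_index m x = k \/ (x = INR k / INR m /\ (k < m)%nat /\ piece_index m x = S k).
Proof.
  intros Hk Hx. assert (Hm : 0 < INR m) by (apply lt_0_INR; lia).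
  set (y := INR m * x).
  assert (Hy1 : INR k - 1 <= y).
  { unfold y. destruct Hx as [Hx _]. apply (Rmult_le_compat_l (INR m)) in Hx; [|lra].
    replace (INR m * ((INR k - 1) / INR m)) with (INR k - 1) in Hx by (field; lra). exact Hx. }
  assert (Hy2 : y <= INR k).
  { unfold y. destruct Hx as [_ Hx]. apply (Rmult_le_compat_l (INR m)) in Hx; [|lra].
    replace (INR m * (INR k / INR m)) with (INR k) in Hx by (field; lra). exact Hx. }
  destruct (archimed y) as [A1 A2].
  rewrite INR_IZR_INZ in Hy1, Hy2.
  unfold piece_index. fold y.
  destruct Hy2 as [Hlt|Heq].
  - left. assert (E : up y = Z.of_nat k).
    { assert (Z1 : (Z.of_nat k - 1 < up y)%Z) by (apply lt_IZR; rewrite minus_IZR; simpl; lra).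
      assert (Z2 : (up y < Z.of_nat k + 1)%Z) by (apply lt_IZR; rewrite plus_IZR; simpl; lra).
      lia. }
    rewrite E, Nat2Z.id. lia.
  - assert (E : up y = (Z.of_nat k + 1)%Z).
    { assert (Z1 : (Z.of_nat k < up y)%Z) by (apply lt_IZR; lra).
      assert (Z2 : (up y < Z.of_nat k + 2)%Z) by (apply lt_IZR; rewrite plus_IZR; simpl; lra).
      lia. }
    rewrite E. replace (Z.to_nat (Z.of_nat k + 1)) with (S k) by lia.
    destruct (Nat.eq_dec k m) as [->|Hne].
    + left. lia.
    + right. split; [|split; lia].
      unfold y in Heq. rewrite <- INR_IZR_INZ in Heq. apply (f_equal (fun z => z / INR m)) in Heq.
      rewrite <- Heq. field. lra.
Qed.


Theorem mainTheorem1 (n m : nat) (f : R -> R) :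
  (1 <= n)%nat -> (1 <= m)%nat -> continuous_on_01 f ->
  forall (k : nat) (x : R), (1 <= k <= m)%nat ->
    (INR k - 1) / INR m <= x <= INR k / INR m ->
    Rabs (Bbar n m f x - f x) <=
      3 / 2 * omega2 f (sqrt ((x - (INR k - 1) / INR m) * (INR k / INR m - x) / INR n)).
Proof.
  intros Hn Hm Hf k x Hk Hx.
  assert (Hm0 : 0 < INR m) by (apply lt_0_INR; lia).
  assert (Hk1 : 1 <= INR k) by (apply (le_INR 1); lia).
  assert (Hkm : INR k <= INR m) by (apply le_INR; lia).
  destruct (omega2_spec f (sqrt ((x - (INR k - 1) / INR m) * (INR k / INR m - x) / INR n)) Hf (sqrt_pos _))
    as [Hsp Hnn].
  destruct (piece_cases m k x Hk Hx) as [Hp|[Hxe [Hkm' Hp]]].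
  - unfold Bbar, B_nk. rewrite Hp.
    set (a := (INR k - 1) / INR m) in *. set (b := INR k / INR m) in *.
    assert (Ha0 : 0 <= a) by (unfold a; apply Rdiv_le_0_compat; lra).
    assert (Hb1 : b <= 1) by (unfold b; apply (Rmult_le_reg_r (INR m)); [lra|]; field_simplify; lra).
    assert (Hab : a < b) by (unfold a, b; apply Rmult_lt_compat_r; [apply Rinv_0_lt_compat; lra| lra]).
    assert (HE : bernstein_ab a b n f x = bernstein_ab a b n (fun z => f (clamp z)) x).
    { apply bern_ext; auto. intros y Hy. rewrite clamp_id; [reflexivity| lra]. }
    rewrite HE.
    replace (f x) with (f (clamp x)) by (rewrite clamp_id; [reflexivity| lra]).
    apply (core (fun z => f (clamp z))); auto.
    + apply fc_cont, Hf.
    + intros y u Hu H1 H2.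
      rewrite !clamp_id by lra. apply Hsp.
      exists y, u. repeat split; try lra. rewrite Rabs_right by lra. lra.
  - unfold Bbar, B_nk. rewrite Hp.
    assert (Ea : (INR (S k) - 1) / INR m = x) by (rewrite Hxe, S_INR; field; lra).
    rewrite Ea. rewrite bern_left.
    + rewrite Rabs_R0. lra.
    + rewrite Hxe, S_INR. apply Rmult_lt_compat_r; [apply Rinv_0_lt_compat; lra| lra].
Qed.
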